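(* Let $\mathfrak{n}$ be a $2$-step nilpotent real Lie algebra with center $\mathfrak{z}$ such that $\mathfrak{n}'=[\mathfrak{n},\mathfrak{n}]=\mathfrak{z}$ and $\dim\mathfrak{n}'$ is odd. Then every complex structure on $\mathfrak{n}$ is $3$-step.
   Context: A complex structure on a real Lie algebra $\mathfrak{g}$ is a linear map $J:\mathfrak{g}\to\mathfrak{g}$ with $J^2=-I$ and $N_J(x,y):=[x,y]+J([Jx,y]+[x,Jy])-[Jx,Jy]=0$ for all $x,y\in\mathfrak{g}$. Given such $J$, define inductively $\mathfrak{a}_0(J)=0$ and $\mathfrak{a}_\ell(J)=\{x\in\mathfrak{g}: [x,\mathfrak{g}]\subset\mathfrak{a}_{\ell-1}(J)\text{ and }[Jx,\mathfrak{g}]\subset\mathfrak{a}_{\ell-1}(J)\}$ for $\ell\ge1$. $J$ is called nilpotent if $\mathfrak{a}_t(J)=\mathfrak{g}$ for some positive integer $t$, and $t$-step if $t$ is the smallest such integer. A Lie algebra $\mathfrak{n}$ is $2$-step nilpotent if it is non-abelian and $\mathfrak{n}'\subset\mathfrak{z}$. *)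

(* Defs.v *)
From HB Require Import structures.
From mathcomp Require Import all_boot all_order all_algebra.
From mathcomp Require Import reals.
Set Implicit Arguments. Unset Strict Implicit. Unset Printing Implicit Defensive.
Import Order.TTheory GRing.Theory Num.Theory.
Local Open Scope ring_scope.

Section Lie.
Variables (R : fieldType) (V : vectType R).

Definition is_lie_bracket (br : V -> V -> V) : Prop :=
  [/\ (forall a x y z, br (a *: x + y) z = a *: br x z + br y z),
      (forall a x y z, br z (a *: x + y) = a *: br z x + br z y),
      (forall x, br x x = 0) &
      (forall x y z, br x (br y z) + br y (br z x) + br z (br x y) = 0)].

Definition in_derived (br : V -> V -> V) (x : V) : Prop :=
  exists s : seq (V * V), x = \sum_(p <- s) br p.1 p.2.

Definition in_center (br : V -> V -> V) (x : V) : Prop :=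
  forall y, br x y = 0.

Definition two_step_nilpotent (br : V -> V -> V) : Prop :=
  (exists x y, br x y <> 0) /\ (forall x, in_derived br x -> in_center br x).

Definition complex_structure (br : V -> V -> V) (J : 'End(V)) : Prop :=
  (forall x, J (J x) = - x) /\
  (forall x y, br x y + J (br (J x) y + br x (J y)) - br (J x) (J y) = 0).

Fixpoint asc_series (br : V -> V -> V) (J : 'End(V)) (l : nat) : V -> Prop :=
  match l with
  | 0 => fun x => x = 0
  | l'.+1 => fun x => (forall y, asc_series br J l' (br x y)) /\
                      (forall y, asc_series br J l' (br (J x) y))
  end.

Definition t_step (br : V -> V -> V) (J : 'End(V)) (t : nat) : Prop :=
  (0 < t)%N /\ (forall x, asc_series br J t x) /\
  (forall s, (0 < s < t)%N -> exists x, ~ asc_series br J s x).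

End Lie.

(* Main.v *)
Require Import Defs.
From HB Require Import structures.
From mathcomp Require Import all_boot all_order all_algebra.
From mathcomp Require Import reals.
From Stdlib Require Import Classical.
Import Order.TTheory GRing.Theory Num.Theory passmx.
Local Open Scope ring_scope.

Lemma even_dim_aux (R : realFieldType) (U : vectType R) (f : 'End(U)) :
  (forall x, f (f x) = - x) -> ~~ odd (\dim {:U}).
Proof.
move=> ff.
have eB := vbasisP (fullv : {vspace U}).
set e := vbasis fullv in eB.
have Hc : (f \o f)%VF = - \1%VF.
  by apply/lfunP => x; rewrite comp_lfunE !lfunE /= ff lfunE.
have HM : mxof e e f *m mxof e e f = - 1%:M.
  by rewrite -(mxof_comp e e eB) Hc linearN /= mxof1 // (basis_free eB).
have := congr1 determinant HM.
rewrite det_mulmx -scaleN1r detZ; rewrite det_scalar expr1n mulr1 => Hd.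
apply/negP => Hodd.
move: Hd; rewrite -signr_odd Hodd expr1 => Hd.
have : 0 <= \det (mxof e e f) * \det (mxof e e f) by rewrite -expr2 sqr_ge0.
by rewrite Hd ler0N1.
Qed.

Lemma even_dim_sub (R : realFieldType) (V : vectType R) (W : {vspace V})
  (J : 'End(V)) :
  (forall x, J (J x) = - x) -> (forall x, x \in W -> J x \in W) ->
  ~~ odd (\dim W).
Proof.
move=> JJ JW.
pose g : 'End(subvs_of W) := (linfun (vsproj W) \o J \o linfun vsval)%VF.
have gg : forall u, g (g u) = - u.
  move=> u; rewrite /g !comp_lfunE !lfunE /= vsprojK; last by apply: JW; exact: subvsP.
  by rewrite JJ linearN /= vsvalK.
have := @even_dim_aux _ _ g gg.
by rewrite dimvf.
Qed.

Theorem mainTheorem7 (R : realType) (V : vectType R) (br : V -> V -> V)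
  (Hlie : is_lie_bracket br)
  (H2 : two_step_nilpotent br)
  (Hdz : forall x, in_derived br x <-> in_center br x)
  (Hodd : exists W : {vspace V},
            (forall x, x \in W <-> in_derived br x) /\ odd (\dim W)) :
  forall J : 'End(V), complex_structure br J -> t_step br J 3.
Proof.
move=> J [JJ HN].
have brD : forall x y, in_derived br (br x y).
  by move=> x y; exists [:: (x, y)]; rewrite big_seq1.
have brC : forall x y w, br (br x y) w = 0.
  by move=> x y w; apply/(Hdz _).1.
have zC : in_center br 0.
  by apply/(Hdz _).1; exists [::]; rewrite big_nil.
have asc1_0 : asc_series br J 1 0.
  by split => w //=; rewrite ?linear0; apply: zC.
have asc2 : forall c, in_center br c -> asc_series br J 2 c.
  move=> c Hc; split => y /=.
    by rewrite Hc; exact: asc1_0.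
  split => w; first by apply: brC.
  have := HN c y; rewrite Hc (Hc (J y)) add0r addr0 => /eqP.
  by rewrite subr_eq0 => /eqP ->; apply: brC.
split => //; split.
  move=> x; split => y; apply: asc2; apply/(Hdz _).1; apply: brD.
move=> s /andP[s0 s3].
have [-> | ->] : s = 1%N \/ s = 2%N by case: s s0 s3 => [|[|[|]]] //; auto.
  have [x [y Hxy]] := H2.1.
  by exists x => -[H _]; apply: Hxy; apply: H.
apply: NNPP => Hn.
have Hall : forall x, asc_series br J 2 x.
  move=> x; apply: NNPP => Hx; apply: Hn; by exists x.
have [W [HW oW]] := Hodd.
have JW : forall x, x \in W -> J x \in W.
  move=> x /HW [sq ->]; rewrite linear_sum; apply: rpred_sum => p _.
  apply/HW; apply/(Hdz _).2 => w.
  by have [H _] := Hall p.1; have [_ H'] := H p.2; apply: H'.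
by have := @even_dim_sub _ _ W J JJ JW; rewrite oW.
Qed.
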